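(* Let $f\in C(\mathbb{R};\mathbb{R})$ satisfy $f(0)=0$ and $xf(x)>0$ for all $x\neq 0$, and let $g\in C([0,\infty);\mathbb{R})$ with $g\in L^1(0,\infty)$. Then every continuous solution $x$ of \[ x'(t)=-f(x(t))+g(t),\quad t>0;\qquad x(0)=\xi\in\mathbb{R}, \] satisfies $\lim_{t\to\infty}x(t)=0$.
   Context: Solutions are understood to be global continuous solutions on $[0,\infty)$ (the sign condition on $f$ ensures no blow-up in finite time). *)

(* Defs.v *)
From Stdlib Require Import Reals Lra.
Open Scope R_scope.

Definition cont_on_nonneg (h : R -> R) : Prop :=
  forall t0, 0 <= t0 -> limit1_in h (fun t => 0 <= t) (h t0) t0.

(* g in L^1(0, +oo) for a continuous g: the Riemann integrals of |g| over
   [0, T] are bounded uniformly in T (equivalent to Lebesgue integrability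
   of a continuous function on (0, +oo)). *)
Definition L1_nonneg (g : R -> R) : Prop :=
  exists M : R, forall T : R, 0 <= T ->
    forall pr : Riemann_integrable (fun t => Rabs (g t)) 0 T,
      RiemannInt pr <= M.

Definition lim_at_infty (h : R -> R) (l : R) : Prop :=
  forall eps : R, 0 < eps -> exists T : R, forall t : R, T <= t -> Rabs (h t - l) < eps.

(* Main.v *)
Require Import Defs.
From Stdlib Require Import Reals Lra Classical.
From Coquelicot Require Import Coquelicot.
Open Scope R_scope.

Lemma mvt_bound (f g x G : R -> R) (a b m : R) :
  (forall t, 1 <= t -> derivable_pt_lim x t (- f (x t) + g t)) ->
  (forall t, 1 <= t -> derivable_pt_lim G t (Rabs (g t))) ->
  1 <= a -> a <= b ->
  (forall c, a < c < b -> m <= f (x c)) ->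
  x b - x a <= G b - G a - m * (b - a).
Proof.
  intros Hx HG Ha Hab Hm.
  destruct (Req_dec a b) as [<-|Hne]. { lra. }
  destruct (MVT_cor2 (fun t => x t - G t) (fun t => - f (x t) + g t - Rabs (g t)) a b)
    as [c [Hc1 Hc2]]; [lra| |].
  { intros c Hc. apply derivable_pt_lim_minus; [apply Hx|apply HG]; lra. }
  pose proof (Hm c Hc2). pose proof (Rle_abs (g c)).
  assert ((- f (x c) + g c - Rabs (g c)) * (b - a) <= - m * (b - a)).
  { apply Rmult_le_compat_r; lra. }
  lra.
Qed.

Lemma upper (f g x G : R -> R) (M : R) :
  continuity f ->
  (forall y, 0 < y -> 0 < f y) ->
  (forall t, 1 <= t -> derivable_pt_lim x t (- f (x t) + g t)) ->
  (forall t, 1 <= t -> derivable_pt_lim G t (Rabs (g t))) ->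
  (forall t, 1 <= t -> G t <= M) ->
  forall eps, 0 < eps -> exists T, forall t, T <= t -> x t < eps.
Proof.
  intros Hfc Hfp Hx HG HM eps Heps.
  assert (Gmono : forall a b, 1 <= a -> a <= b -> G a <= G b).
  { intros a b Ha Hab.
    destruct (Req_dec a b) as [<-|Hne]. { lra. }
    destruct (MVT_cor2 G (fun t => Rabs (g t)) a b) as [c [Hc1 Hc2]]; [lra| |].
    { intros c Hc. apply HG; lra. }
    pose proof (Rabs_pos (g c)).
    assert (0 <= Rabs (g c) * (b - a)) by (apply Rmult_le_pos; lra). lra. }
  assert (Htail : exists T0, 1 <= T0 /\ forall t, T0 <= t -> G t - G T0 < eps / 2).
  { set (E := fun y => exists t, 1 <= t /\ y = G t).
    destruct (completeness E) as [L [HL1 HL2]].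
    { exists M. intros y [t [Ht ->]]. apply HM; lra. }
    { exists (G 1). exists 1. split; lra. }
    destruct (classic (exists t0, 1 <= t0 /\ L - eps / 2 < G t0)) as [[t0 [Ht0 Hlt]]|Hno].
    - exists t0. split; [lra|]. intros t Ht.
      assert (G t <= L) by (apply HL1; exists t; split; lra). lra.
    - exfalso.
      assert (L <= L - eps / 2).
      { apply HL2. intros y [t [Ht ->]].
        destruct (Rle_dec (G t) (L - eps / 2)) as [h|h]; [exact h|].
        exfalso; apply Hno; exists t; split; lra. }
      lra. }
  destruct Htail as [T0 [HT0 Htail]].
  assert (C1 : forall T, T0 <= T -> exists t, T <= t /\ x t < eps / 2).
  { intros T HT.
    apply NNPP; intro Hno.
    assert (Hge : forall t, T <= t -> eps / 2 <= x t).
    { intros t Ht. destruct (Rle_dec (eps/2) (x t)) as [h|h]; [exact h|].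
      exfalso; apply Hno; exists t; split; lra. }
    set (K := x T + M - G T).
    assert (HMT : G T <= M) by (apply HM; lra).
    assert (Hxt0 : eps / 2 <= x T) by (apply Hge; lra).
    assert (Hbd : forall t, T <= t -> x t <= K).
    { intros t Ht.
      pose proof (mvt_bound f g x G T t 0 Hx HG ltac:(lra) Ht) as H.
      assert (forall c, T < c < t -> 0 <= f (x c)).
      { intros c Hc. left. apply Hfp. pose proof (Hge c ltac:(lra)). lra. }
      specialize (H H0). pose proof (HM t ltac:(lra)). unfold K. lra. }
    destruct (continuity_ab_min f (eps/2) K) as [mx [Hmx1 Hmx2]].
    { unfold K; lra. }
    { intros c _. apply Hfc. }
    assert (Hm : 0 < f mx) by (apply Hfp; lra).
    set (t := T + (K - eps/2) / f mx + 1).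
    assert (Hdiv : 0 <= (K - eps/2) / f mx).
    { apply Rmult_le_pos; [unfold K; lra|]. left; apply Rinv_0_lt_compat; lra. }
    assert (HTt : T <= t) by (unfold t; lra).
    pose proof (mvt_bound f g x G T t (f mx) Hx HG ltac:(lra) HTt) as H.
    assert (forall c, T < c < t -> f mx <= f (x c)).
    { intros c Hc. apply Hmx1. split; [apply Hge; lra| apply Hbd; lra]. }
    specialize (H H0).
    pose proof (HM t ltac:(lra)).
    assert (f mx * (t - T) = K - eps/2 + f mx).
    { unfold t. field. lra. }
    pose proof (Hge t HTt). unfold K in *. nra. }
  destruct (C1 T0 (Rle_refl _)) as [T1 [HT1 HxT1]].
  exists T1. intros t Ht.
  apply Rnot_le_lt. intro Hxt.
  set (E := fun s => T1 <= s <= t /\ x s <= eps / 2).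
  destruct (completeness E) as [s [Hs1 Hs2]].
  { exists t. intros y [Hy _]. lra. }
  { exists T1. split; lra. }
  assert (HsT1 : T1 <= s) by (apply Hs1; split; lra).
  assert (Hst : s <= t) by (apply Hs2; intros y [Hy _]; lra).
  assert (Hxs : x s <= eps / 2).
  { apply Rnot_lt_le. intro Hlt.
    assert (Hc : continuity_pt x s).
    { apply derivable_continuous_pt. exists (- f (x s) + g s). apply Hx. lra. }
    destruct (Hc (x s - eps/2) ltac:(lra)) as [d [Hd Hd2]].
    assert (s <= s - d/2).
    { apply Hs2. intros y [Hy1 Hy2].
      pose proof (Hs1 y (conj Hy1 Hy2)).
      destruct (Rle_dec y (s - d/2)) as [h|h]; [exact h|].
      exfalso.
      destruct (Req_dec y s) as [->|hne]; [lra|].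
      assert (R_dist (x y) (x s) < x s - eps/2).
      { apply Hd2. split.
        - split; [exact I| auto].
        - change (Rabs (y - s) < d). rewrite Rabs_left1; lra. }
      change (Rabs (x y - x s) < x s - eps/2) in H0. rewrite Rabs_left1 in H0; lra. }
    lra. }
  assert (Hst' : s < t).
  { destruct (Req_dec s t) as [->|]; lra. }
  pose proof (mvt_bound f g x G s t 0 Hx HG ltac:(lra) Hst) as H.
  assert (forall c, s < c < t -> 0 <= f (x c)).
  { intros c Hc. left. apply Hfp.
    apply Rnot_le_lt. intro hle.
    assert (c <= s) by (apply Hs1; split; lra). lra. }
  specialize (H H0).
  pose proof (Gmono T0 s ltac:(lra) ltac:(lra)).
  pose proof (Htail t ltac:(lra)).
  lra.
Qed.

Lemma Rmax_lip (s t : R) : Rabs (Rmax 0 s - Rmax 0 t) <= Rabs (s - t).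
Proof.
  unfold Rmax; destruct (Rle_dec 0 s); destruct (Rle_dec 0 t);
  unfold Rabs; repeat destruct Rcase_abs; lra.
Qed.

Theorem proposition1 (f g x : R -> R) (xi : R)
  (Hf_cont : continuity f)
  (Hf0 : f 0 = 0)
  (Hf_sign : forall y : R, y <> 0 -> y * f y > 0)
  (Hg_cont : cont_on_nonneg g)
  (Hg_L1 : L1_nonneg g)
  (Hx_cont : cont_on_nonneg x)
  (Hx_ode : forall t : R, 0 < t -> derivable_pt_lim x t (- f (x t) + g t))
  (Hx0 : x 0 = xi) :
  lim_at_infty x 0.
Proof.
  destruct Hg_L1 as [M HM].
  set (h := fun s => Rabs (g (Rmax 0 s))).
  assert (Hhc : forall t, continuity_pt h t).
  { intro t. unfold h.
    apply (continuity_pt_comp (fun s => g (Rmax 0 s)) Rabs).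
    2: apply Rcontinuity_abs.
    intros eps Heps.
    destruct (Hg_cont (Rmax 0 t) (Rmax_l _ _) eps Heps) as [a [Ha H]].
    exists a. split; [exact Ha|]. intros s [_ Hs].
    apply H. split; [apply Rmax_l|].
    change (Rabs (Rmax 0 s - Rmax 0 t) < a).
    change (Rabs (s - t) < a) in Hs.
    pose proof (Rmax_lip s t). lra. }
  assert (Hex : forall a b, ex_RInt h a b).
  { intros a b. apply (@ex_RInt_continuous R_CompleteNormedModule). intros z _.
    apply continuity_pt_filterlim. apply Hhc. }
  set (G := fun t => RInt h 0 t).
  assert (HG : forall t, 1 <= t -> derivable_pt_lim G t (Rabs (g t))).
  { intros t Ht.
    replace (Rabs (g t)) with (h t) by (unfold h; rewrite (Rmax_right 0 t); [reflexivity|lra]).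
    apply is_derive_Reals. apply (is_derive_RInt h G 0 t).
    - apply filter_forall. intro b. apply (@RInt_correct R_CompleteNormedModule). apply Hex.
    - apply continuity_pt_filterlim. apply Hhc. }
  assert (HGM : forall t, 1 <= t -> G t <= M).
  { intros t Ht. unfold G.
    pose proof (ex_RInt_Reals_0 _ _ _ (Hex 0 t)) as prh.
    rewrite (RInt_Reals _ _ _ prh).
    assert (Hext : forall y, Rmin 0 t <= y <= Rmax 0 t -> h y = Rabs (g y)).
    { intros y Hy. rewrite Rmin_left in Hy by lra. unfold h. rewrite (Rmax_right 0 y); [reflexivity|lra]. }
    pose (pra := Riemann_integrable_ext _ _ _ _ Hext prh).
    rewrite (RiemannInt_ext _ _ _ _ prh pra Hext).
    apply HM. lra. }
  intros eps Heps.
  destruct (upper f g x G M Hf_cont) with (eps := eps) as [T1 H1]; auto.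
  { intros y Hy. pose proof (Hf_sign y ltac:(lra)). nra. }
  { intros t Ht. apply Hx_ode. lra. }
  destruct (upper (fun y => - f (- y)) (fun t => - g t) (fun t => - x t) G M)
    with (eps := eps) as [T2 H2]; auto.
  { apply continuity_opp. apply (continuity_comp Ropp f).
    apply continuity_opp, derivable_continuous, derivable_id. exact Hf_cont. }
  { intros y Hy. pose proof (Hf_sign (- y) ltac:(lra)). nra. }
  { intros t Ht.
    replace (- - f (- - x t) + - g t) with (- (- f (x t) + g t))
      by (rewrite !Ropp_involutive; ring).
    apply (derivable_pt_lim_opp x). apply Hx_ode. lra. }
  { intros t Ht. rewrite Rabs_Ropp. apply HG; auto. }
  exists (Rmax T1 T2). intros t Ht.
  pose proof (H1 t ltac:(pose proof (Rmax_l T1 T2); lra)).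
  pose proof (H2 t ltac:(pose proof (Rmax_r T1 T2); lra)).
  rewrite Rminus_0_r. apply Rabs_def1; lra.
Qed.
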